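(* Let $p$ be a prime and $a,b,c>0$ integers with $a,b\le p-1$ and $c\le b$. Assume either $a+b\le p-1$ or $c\le a+b-p+1$. Then $\gcd\big(f(a,b,c),f(a,b,c-1)\big)=1$ in $\overline{\mathbb{F}}_p[t]$.
   Context: For non-negative integers $a,b,c$, $f(a,b,c)\in\overline{\mathbb{F}}_p[t]$ is $f(a,b,c)=\sum_{i_2+i_3=c}\binom{a}{i_2}\binom{b}{i_3}t^{i_2}$ (binomial coefficients reduced mod $p$, $\binom{n}{i}=0$ for $i<0$ or $i>n$). *)

(* Defs.v *)
From HB Require Import structures.
From mathcomp Require Import all_boot all_order all_algebra.
Set Implicit Arguments. Unset Strict Implicit. Unset Printing Implicit Defensive.
Import GRing.Theory.
Local Open Scope ring_scope.

(* f(a,b,c) = sum_{i2 + i3 = c} C(a,i2) C(b,i3) t^{i2}, coefficients cast into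
   the field F (hence reduced mod its characteristic). 'C(n,k) = 0 for k > n. *)
Definition fpoly (F : fieldType) (a b c : nat) : {poly F} :=
  \sum_(i < c.+1) ('C(a, i) * 'C(b, c - i))%:R *: 'X^i.

(* Main.v *)
Require Import Defs.
From HB Require Import structures.
From mathcomp Require Import all_boot all_order all_algebra.
From mathcomp Require Import zify.
Import GRing.Theory.
Local Open Scope ring_scope.

Definition cf (a b k i : nat) : nat :=
  if (i <= k)%N then ('C(a,i) * 'C(b,k-i))%N else 0%N.

Arguments cf : simpl never.
Lemma coef_fpoly (F : fieldType) a b k i :
  (fpoly F a b k)`_i = (cf a b k i)%:R.
Proof.
rewrite /fpoly coef_sum /cf.
under eq_bigr do rewrite coefZ coefXn.
case: leqP => h.
- rewrite (bigD1 (Ordinal (h : (i < k.+1)%N))) //= eqxx mulr1 big1 ?addr0 //.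
  move=> j hj; rewrite (_ : (i == j) = false) ?mulr0 //.
  apply/negbTE; apply: contra hj => /eqP e; apply/eqP/val_inj => /=; by rewrite e.
- rewrite big1 // => j _; rewrite (_ : (i == j) = false) ?mulr0 //.
  apply/negbTE; apply/eqP => e; move: (ltn_ord j); lia.
Qed.

Lemma key0 a b n : (n.+2 <= b)%N ->
  (n.+2 * cf a b n.+2 0 + n.+1 * cf a b n.+1 0 = b * cf a b n.+1 0)%N.
Proof.
move=> h; rewrite /cf /= !bin0 !mul1n !subn0.
have := mul_bin_left b n.+1. lia.
Qed.

Lemma keyS a b n j : (n.+2 <= b)%N ->
  (n.+2 * cf a b n.+2 j.+1 + n.+1 * (cf a b n.+1 j.+1 + cf a b n.+1 j) =
   a * cf a b n.+1 j + b * cf a b n.+1 j.+1 + (a+b-n) * cf a b n j)%N.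
Proof.
move=> h; rewrite /cf.
have Hx := mul_bin_left a j.
case: (leqP j n) => hjn.
- have [l El] : exists l, n = (j + l)%N by exists (n - j)%N; lia.
  subst n.
  rewrite (_ : ((j.+1 <= (j+l).+2)%N) = true); last lia.
  rewrite (_ : ((j.+1 <= (j+l).+1)%N) = true); last lia.
  rewrite (_ : ((j <= (j+l).+1)%N) = true); last lia.
  idtac.
  rewrite (_ : ((j+l).+2 - j.+1 = l.+1)%N); last lia.
  rewrite (_ : ((j+l).+1 - j.+1 = l)%N); last lia.
  rewrite (_ : ((j+l).+1 - j = l.+1)%N); last lia.
  rewrite (_ : ((j+l) - j = l)%N); last lia.
  have Hy := mul_bin_left b l.
  case: (leqP j a) => hja; last first.
    by rewrite (bin_small hja) (bin_small (ltn_trans hja (ltnSn j))); lia.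
  have [a' Ea] : exists a', a = (j + a')%N by exists (a - j)%N; lia.
  have [b' Eb] : exists b', b = (l + b')%N by exists (b - l)%N; lia.
  subst a b.
  rewrite (_ : (j + a' - j = a')%N) in Hx; last lia.
  rewrite (_ : (l + b' - l = b')%N) in Hy; last lia.
  set x := 'C(_, j) in Hx *. set x' := 'C(_, j.+1) in Hx *.
  set y := 'C(_, l) in Hy *. set y' := 'C(_, l.+1) in Hy *.
  have H1 := congr1 (muln^~ y) Hx. have H2 := congr1 (muln^~ y') Hx.
  have H3 := congr1 (muln x) Hy. have H4 := congr1 (muln x') Hy.
  simpl in *. nia.
- case: (eqVneq j n.+1) => [->|hj].
  + do ![case: ifP => ?]; try lia.
    rewrite !subnn !bin0 !muln1.
    have := mul_bin_left a n.+1.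
    case: (leqP n.+1 a) => ha; first nia.
    rewrite (bin_small ha) (bin_small (ltn_trans ha (ltnSn _))); lia.
  + do ![case: ifP => ?]; lia.
Qed.

Lemma recF (F : fieldType) a b n : (n.+2 <= b)%N ->
  n.+2%:R *: fpoly F a b n.+2 + n.+1%:R *: ((1 + 'X) * fpoly F a b n.+1) =
  a%:R *: ('X * fpoly F a b n.+1) + b%:R *: fpoly F a b n.+1
   + (a + b - n)%:R *: ('X * fpoly F a b n) :> {poly F}.
Proof.
move=> h; apply/polyP => i.
rewrite mulrDl mul1r !coefD !coefZ coefD !coefXM !coef_fpoly.
case: i => [|j].
- rewrite eqxx /= !addr0 !mulr0 add0r -!natrM -!natrD addr0.
  by rewrite (key0 a b n h).
- rewrite -[j.+1 == 0%N]/false /= -!natrM -!natrD.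
  by rewrite -natrM -natrD (keyS a b n j h).
Qed.

Lemma fpoly0 (F : fieldType) a b : fpoly F a b 0 = 1.
Proof.
apply/polyP => i; rewrite coef_fpoly coef1 /cf.
by case: i => [|i] //=; rewrite !bin0.
Qed.

Lemma not_dvd_fact p k : prime p -> (k < p)%N -> ~~ (p %| k`!)%N.
Proof.
move=> hp; elim: k => [|k IH] hk; first by rewrite /= Euclid_dvd1.
rewrite factS Euclid_dvdM // negb_or IH ?andbT; last lia.
apply/negP => /dvdn_leq; lia.
Qed.

Theorem lemmaA5 (F : closedFieldType) (p : nat) (hp : prime p)
  (hchar : p \in [pchar F]) (a b c : nat)
  (ha : (0 < a)%N) (hb : (0 < b)%N) (hc : (0 < c)%N)
  (hap : (a <= p - 1)%N) (hbp : (b <= p - 1)%N) (hcb : (c <= b)%N)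
  (hcase : (a + b <= p - 1)%N \/ (c + p <= a + b + 1)%N) :
  coprimep (fpoly F a b c) (fpoly F a b (c - 1)).
Proof.
have hp1 := prime_gt1 hp.
have nz : forall m, ~~ (p %| m)%N -> (m%:R : F) != 0.
  by move=> m; rewrite (dvdn_pcharf hchar).
apply/coprimepP => d d1 d2.
have hX : coprimep d 'X.
  have := coprimep_XsubC d 0; rewrite polyC0 subr0 => ->.
  apply/negP => /eqP r0.
  have : root (fpoly F a b c) 0.
    by apply: (root_dvdp d1); apply/eqP.
  rewrite /root horner_coef0 coef_fpoly /cf /= subn0 bin0 mul1n.
  apply/negP; apply: nz; apply/negP => hd.
  have := bin_fact hcb; move=> E.
  have : (p %| b`!)%N by rewrite -E dvdn_mulr.
  by apply/negP; apply: not_dvd_fact => //; lia.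
case: c hc hcb hcase d1 d2 => [//|c'] _ hcb hcase d1 d2.
rewrite subSS subn0 in d2.
have ind : forall k, (k <= c')%N ->
    (d %| fpoly F a b (c' - k)) && (d %| fpoly F a b (c'.+1 - k)).
  elim => [_|k IH hk]; first by rewrite !subn0 d1 d2.
  have := IH (ltnW hk).
  have E1 : (c' - k = (c' - k.+1).+1)%N by lia.
  have E2 : (c'.+1 - k = (c' - k.+1).+2)%N by lia.
  rewrite E1 E2; set n := (c' - k.+1)%N => /andP [h1 h2].
  rewrite subSS E1 -/n h1 andbT.
  have hnb : (n.+2 <= b)%N by rewrite /n; lia.
  have R := recF F a b n hnb.
  have hnz : ((a + b - n)%:R : F) != 0.
    apply: nz; apply/negP => /dvdnP [q Eq].
    rewrite /n in Eq; move: Eq; case: q => [|[|q]]; rewrite ?mulSn; case: hcase; lia.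
  rewrite -(Gauss_dvdpr _ hX) -(dvdpZr _ _ hnz).
  have -> : (a + b - n)%:R *: ('X * fpoly F a b n) =
     n.+2%:R *: fpoly F a b n.+2 + n.+1%:R *: ((1 + 'X) * fpoly F a b n.+1) -
     (a%:R *: ('X * fpoly F a b n.+1) + b%:R *: fpoly F a b n.+1).
    by rewrite R addrC addKr.
  apply: dvdp_sub; apply: dvdp_add; rewrite -mul_polyC;
    do ?apply: dvdp_mull; by [].
have := ind c' (leqnn _); rewrite subnn fpoly0 => /andP [h0 _].
by apply: dvdp_eqp1 h0 _; rewrite eqpxx.
Qed.
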